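(* Let $M\in\mathrm{SL}(3,\mathbb R)$, $\mathcal D=\mathbb S_1^1$, $K=\mathcal G_{\mathcal D}(M)$, and let $(u_1,\vec v_1),\dots,(u_K,\vec v_K)\in\mathcal Q_{\mathcal D}(M)$ satisfy (V1)–(V3) and $u_i\ge0$ for all $i$. Then for all $1\le i<j\le K-1$ the angle between $\vec v_i$ and $\vec v_j$ is greater than $\pi/3$. Moreover, for all $1\le i<j<k\le K-1$, the vector $\vec v_i$ does not lie in the positive cone $\{a\vec v_j+b\vec v_k: a,b\ge0\}$ determined by $\vec v_j$ and $\vec v_k$.
   Context: Row vectors in $\mathbb R^3$ are written $(u,\vec v)$, $u\in\mathbb R$, $\vec v\in\mathbb R^2$; $\mathbb Z^3M=\{\vec mM:\vec m\in\mathbb Z^3\}$. For $\mathcal D\subseteq\mathbb S_1^1$ (unit circle): $\mathcal Q_{\mathcal D}(M,t)=\{(u,\vec v)\in\mathbb Z^3M:-t<u<1-t,\ \vec v\in\mathbb R_{>0}\mathcal D\}$ for $t\in(0,1)$; $\mathcal Q_{\mathcal D}(M)=\{(u,\vec v)\in\mathbb Z^3M:|u|<1,\ \vec v\in\mathbb R_{>0}\mathcal D\}$; $F_{\mathcal D}(M,t)=\min\{|\vec v|:(u,\vec v)\in\mathcal Q_{\mathcal D}(M,t)\}$; $\mathcal F_{\mathcal D}(M)=\{F_{\mathcal D}(M,t):0<t<1\}$ and $\mathcal G_{\mathcal D}(M)=|\mathcal F_{\mathcal D}(M)|$. Conditions: (V1) $0<|\vec v_1|<\cdots<|\vec v_K|$;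 (V2) each $\delta\in\mathcal F_{\mathcal D}(M)$ equals $|\vec v_i|$ for some $i$; (V3) for each $i$ there is $t\in(0,1)$ with $(u_i,\vec v_i)\in\mathcal Q_{\mathcal D}(M,t)$ and $|\vec v_i|=F_{\mathcal D}(M,t)$. *)

(* Defs.v *)
From Stdlib Require Import Reals Lra ZArith List.
Open Scope R_scope.

(* Points of R^3 written (u, v) with u : R, v : R^2 = R*R. *)
Definition R2 := (R * R)%type.
Definition pt := (R * R2)%type.

(* A 3x3 real matrix, entries M i j for i, j in {0,1,2}. *)
Definition mat3 := nat -> nat -> R.

Definition det3 (M : mat3) : R :=
  M 0%nat 0%nat * (M 1%nat 1%nat * M 2%nat 2%nat - M 1%nat 2%nat * M 2%nat 1%nat)
  - M 0%nat 1%nat * (M 1%nat 0%nat * M 2%nat 2%nat - M 1%nat 2%nat * M 2%nat 0%nat)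
  + M 0%nat 2%nat * (M 1%nat 0%nat * M 2%nat 1%nat - M 1%nat 1%nat * M 2%nat 0%nat).

Definition SL3 (M : mat3) : Prop := det3 M = 1.

Definition rowmul (m0 m1 m2 : R) (M : mat3) (j : nat) : R :=
  m0 * M 0%nat j + m1 * M 1%nat j + m2 * M 2%nat j.

Definition in_lattice (M : mat3) (p : pt) : Prop :=
  exists m0 m1 m2 : Z,
    p = (rowmul (IZR m0) (IZR m1) (IZR m2) M 0%nat,
         (rowmul (IZR m0) (IZR m1) (IZR m2) M 1%nat,
          rowmul (IZR m0) (IZR m1) (IZR m2) M 2%nat)).

Definition dot2 (v w : R2) : R := fst v * fst w + snd v * snd w.
Definition norm2 (v : R2) : R := sqrt (dot2 v v).

Definition unit_circle (d : R2) : Prop := norm2 d = 1.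

Definition in_cone (D : R2 -> Prop) (v : R2) : Prop :=
  exists r d, 0 < r /\ D d /\ v = (r * fst d, r * snd d).

Definition Qt (D : R2 -> Prop) (M : mat3) (t : R) (p : pt) : Prop :=
  in_lattice M p /\ - t < fst p < 1 - t /\ in_cone D (snd p).

Definition Q (D : R2 -> Prop) (M : mat3) (p : pt) : Prop :=
  in_lattice M p /\ Rabs (fst p) < 1 /\ in_cone D (snd p).

Definition F_is (D : R2 -> Prop) (M : mat3) (t delta : R) : Prop :=
  (exists p, Qt D M t p /\ norm2 (snd p) = delta) /\
  (forall p, Qt D M t p -> delta <= norm2 (snd p)).

Definition in_FD (D : R2 -> Prop) (M : mat3) (delta : R) : Prop :=
  exists t, 0 < t < 1 /\ F_is D M t delta.

Definition has_card (P : R -> Prop) (K : nat) : Prop :=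
  exists l : list R, NoDup l /\ length l = K /\ (forall x, P x <-> In x l).

Definition G_is (D : R2 -> Prop) (M : mat3) (K : nat) : Prop :=
  has_card (in_FD D M) K.

Definition angle2 (v w : R2) : R := acos (dot2 v w / (norm2 v * norm2 w)).

Definition V1 (K : nat) (v : nat -> R2) : Prop :=
  0 < norm2 (v 1%nat) /\
  (forall i, (1 <= i)%nat -> (i < K)%nat -> norm2 (v i) < norm2 (v (S i))).

Definition V2 (D : R2 -> Prop) (M : mat3) (K : nat) (v : nat -> R2) : Prop :=
  forall delta, in_FD D M delta ->
    exists i, (1 <= i <= K)%nat /\ norm2 (v i) = delta.

Definition V3 (D : R2 -> Prop) (M : mat3) (K : nat) (u : nat -> R) (v : nat -> R2) : Prop :=
  forall i, (1 <= i <= K)%nat ->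
    exists t, 0 < t < 1 /\ Qt D M t (u i, v i) /\ F_is D M t (norm2 (v i)).

(* Main.v *)
Require Import Defs.
From Stdlib Require Import Reals Lra ZArith List.
From Stdlib Require Import Lia Psatz.
Open Scope R_scope.

Definition padd (p q : pt) : pt :=
  (fst p + fst q, (fst (snd p) + fst (snd q), snd (snd p) + snd (snd q))).
Definition psub (p q : pt) : pt :=
  (fst p - fst q, (fst (snd p) - fst (snd q), snd (snd p) - snd (snd q))).
Definition popp (p : pt) : pt := (- fst p, (- fst (snd p), - snd (snd p))).

Lemma lat_add M p q : in_lattice M p -> in_lattice M q -> in_lattice M (padd p q).
Proof.
  intros [a0 [a1 [a2 Ha]]] [b0 [b1 [b2 Hb]]]; subst.
  exists (a0 + b0)%Z, (a1 + b1)%Z, (a2 + b2)%Z.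
  rewrite !plus_IZR; unfold padd, rowmul; simpl; f_equal; [ring | f_equal; ring].
Qed.

Lemma lat_sub M p q : in_lattice M p -> in_lattice M q -> in_lattice M (psub p q).
Proof.
  intros [a0 [a1 [a2 Ha]]] [b0 [b1 [b2 Hb]]]; subst.
  exists (a0 - b0)%Z, (a1 - b1)%Z, (a2 - b2)%Z.
  rewrite !minus_IZR; unfold psub, rowmul; simpl; f_equal; [ring | f_equal; ring].
Qed.

Lemma lat_opp M p : in_lattice M p -> in_lattice M (popp p).
Proof.
  intros [a0 [a1 [a2 Ha]]]; subst.
  exists (- a0)%Z, (- a1)%Z, (- a2)%Z.
  rewrite !opp_IZR; unfold popp, rowmul; simpl; f_equal; [ring | f_equal; ring].
Qed.

Lemma dot_nonneg w : 0 <= dot2 w w.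
Proof. unfold dot2; nra. Qed.

Lemma nsq w : norm2 w * norm2 w = dot2 w w.
Proof. unfold norm2; apply sqrt_sqrt, dot_nonneg. Qed.

Lemma n_nonneg w : 0 <= norm2 w.
Proof. unfold norm2; apply sqrt_pos. Qed.

Lemma cone_of_pos w : 0 < dot2 w w -> in_cone unit_circle w.
Proof.
  intros H. destruct w as [w1 w2].
  pose proof (nsq (w1, w2)) as Hs. pose proof (n_nonneg (w1, w2)) as Hn.
  set (r := norm2 (w1, w2)) in *.
  assert (Hr : 0 < r) by nra.
  exists r, (w1 / r, w2 / r). split; [exact Hr | split].
  - unfold unit_circle, norm2. replace (dot2 (w1 / r, w2 / r) (w1 / r, w2 / r)) with 1.
    apply sqrt_1. unfold dot2 in *; simpl in *.
    apply (Rmult_eq_reg_r (r * r)); [|nra].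
    field_simplify; [|lra]. nra.
  - simpl. f_equal; field; lra.
Qed.

Lemma cone_pos w : in_cone unit_circle w -> 0 < dot2 w w.
Proof.
  intros [r [d [Hr [Hd Hw]]]]. unfold unit_circle in Hd.
  pose proof (nsq d) as Hs. rewrite Hd in Hs.
  subst w. unfold dot2 in *; simpl in *. nra.
Qed.

Lemma adm M t L p : F_is unit_circle M t L -> in_lattice M p ->
  - t < fst p < 1 - t -> 0 < dot2 (snd p) (snd p) -> L <= norm2 (snd p).
Proof.
  intros HF Hl Hu Hd. apply (proj2 HF). split; [exact Hl | split; [exact Hu|]].
  apply cone_of_pos; exact Hd.
Qed.

Lemma notadm M t L u w : F_is unit_circle M t L -> in_lattice M (u, w) ->
  0 <= u -> 0 < t < 1 -> 0 < dot2 w w -> norm2 w < L -> t <= u /\ 1 - t <= u.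
Proof.
  intros HF Hl Hu Ht Hd Hn. split.
  - destruct (Rle_or_lt t u) as [H|H]; [exact H|].
    exfalso. pose proof (adm M t L (popp (u, w)) HF (lat_opp _ _ Hl)) as A.
    simpl in A. destruct w as [w1 w2]; simpl in *.
    assert (E : norm2 (- w1, - w2) = norm2 (w1, w2)).
    { unfold norm2, dot2; simpl; f_equal; ring. }
    rewrite E in A. assert (L <= norm2 (w1, w2)); [apply A; [lra|] | lra].
    unfold dot2 in *; simpl in *; nra.
  - destruct (Rle_or_lt (1 - t) u) as [H|H]; [exact H|].
    exfalso. pose proof (adm M t L (u, w) HF Hl) as A. simpl in A.
    assert (L <= norm2 w); [apply A; [lra| exact Hd] | lra].
Qed.

Lemma acos_gt x : x < 1/2 -> acos x > PI / 3.
Proof.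
  intros H. pose proof PI_RGT_0.
  destruct (Rle_dec x (-1)) as [H1|H1].
  { unfold acos. destruct (Rle_dec x (-1)); [lra|contradiction]. }
  destruct (Rle_or_lt (acos x) (PI/3)) as [H3|H3]; [|exact H3].
  exfalso. pose proof (acos_bound x) as Hb.
  assert (H8 : cos (PI/3) <= cos (acos x)).
  { destruct (Rle_lt_or_eq_dec _ _ H3) as [H7|H7].
    - left. apply cos_decreasing_1; lra.
    - rewrite H7; lra. }
  rewrite cos_acos in H8 by lra. rewrite cos_PI3 in H8. lra.
Qed.
Lemma part2_alg (x1 y1 x2 y2 a b p q r L : R) :
  0 <= a -> 0 <= b -> 0 <= p -> 0 <= q ->
  p * p = x1*x1 + y1*y1 -> q * q = x2*x2 + y2*y2 ->
  r * r = (a*x1+b*x2)*(a*x1+b*x2) + (a*y1+b*y2)*(a*y1+b*y2) ->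
  0 < r -> r < p -> p < q -> q < L ->
  (a*x1+b*x2 - x1)*(a*x1+b*x2 - x1) + (a*y1+b*y2 - y1)*(a*y1+b*y2 - y1) >= L * L ->
  (a*x1+b*x2 - x2)*(a*x1+b*x2 - x2) + (a*y1+b*y2 - y2)*(a*y1+b*y2 - y2) >= L * L ->
  ((x1 + x2 - (a*x1+b*x2) = 0 /\ y1 + y2 - (a*y1+b*y2) = 0) \/
   (x1 + x2 - (a*x1+b*x2))*(x1 + x2 - (a*x1+b*x2)) + (y1 + y2 - (a*y1+b*y2))*(y1 + y2 - (a*y1+b*y2)) >= q * q) ->
  False.
Proof.
  intros Ha Hb Hp Hq HP HQ Hr Hr0 Hrp Hpq HqL H1 H2 H3.
  set (i1 := a*x1+b*x2) in *. set (i2 := a*y1+b*y2) in *.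
  set (X := i1*x1 + i2*y1). set (Y := i1*x2+i2*y2). set (c := x1*x2+y1*y2).
  assert (HLq : q*q < L*L) by nra.
  assert (Hqp : p*p < q*q) by nra.
  assert (HX : 2*X < r*r).
  { assert (E : (i1 - x1)*(i1 - x1) + (i2 - y1)*(i2 - y1) = r*r - 2*X + p*p)
      by (rewrite Hr, HP; unfold X; ring). lra. }
  assert (HY : 2*Y < r*r).
  { assert (E : (i1 - x2)*(i1 - x2) + (i2 - y2)*(i2 - y2) = r*r - 2*Y + q*q)
      by (rewrite Hr, HQ; unfold Y; ring). lra. }
  assert (HrXY : r*r = a*X + b*Y) by (rewrite Hr; unfold X, Y, i1, i2; ring).
  assert (Hab0 : 0 < a + b).
  { destruct (Rle_or_lt (a+b) 0) as [H|H]; [|exact H].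
    assert (a = 0) by lra. assert (b = 0) by lra. subst a b.
    unfold i1, i2 in Hr. nra. }
  assert (Hab : a + b > 2).
  { assert (T1 : a*(2*X) <= a*(r*r)) by (apply Rmult_le_compat_l; lra).
    assert (T2 : b*(2*Y) <= b*(r*r)) by (apply Rmult_le_compat_l; lra).
    assert (2*(r*r) < (a+b)*(r*r)).
    { destruct (Rlt_or_le 0 a) as [Ha'|Ha'].
      - assert (a*(2*X) < a*(r*r)) by (apply Rmult_lt_compat_l; lra). nra.
      - assert (b > 0) by lra.
        assert (b*(2*Y) < b*(r*r)) by (apply Rmult_lt_compat_l; lra). nra. }
    assert (0 < r*r) by nra.
    destruct (Rle_or_lt (a+b) 2) as [Hh|Hh]; [|exact Hh].
    assert ((a+b)*(r*r) <= 2*(r*r)) by (apply Rmult_le_compat_r; lra). lra. }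
  assert (Hcs : c*c <= (p*q)*(p*q)).
  { assert (E : (p*q)*(p*q) - c*c = (x1*y2 - x2*y1)*(x1*y2-x2*y1))
      by (replace ((p*q)*(p*q)) with ((p*p)*(q*q)) by ring; rewrite HP, HQ; unfold c; ring).
    pose proof (Rle_0_sqr (x1*y2-x2*y1)) as Z. unfold Rsqr in Z. lra. }
  assert (Hc : - (p*q) <= c).
  { destruct (Rle_or_lt (-(p*q)) c) as [H|H]; [exact H|].
    assert (0 <= p*q) by nra. nra. }
  assert (Hr2 : r*r = a*a*(p*p) + 2*a*b*c + b*b*(q*q))
    by (rewrite Hr, HP, HQ; unfold c, i1, i2; ring).
  assert (Hd : (a*p - b*q)*(a*p - b*q) <= r*r).
  { assert (0 <= a*b) by nra. nra. }
  assert (Hbq : b*q - a*p > - p) by nra.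
  destruct H3 as [[E1 E2]|H3].
  - assert (X + Y = r*r).
    { assert (i1 = x1 + x2) by lra. assert (i2 = y1 + y2) by lra.
      unfold X, Y. rewrite Hr. fold i1 i2. nra. }
    lra.
  - assert (E : (x1 + x2 - i1)*(x1 + x2 - i1) + (y1 + y2 - i2)*(y1 + y2 - i2)
               = p*p + 2*c + q*q - 2*(X+Y) + r*r)
      by (rewrite Hr, HP, HQ; unfold X, Y, c; ring).
    assert (EXY : X + Y = a*(p*p) + (a+b)*c + b*(q*q))
      by (rewrite HP, HQ; unfold X, Y, c, i1, i2; ring).
    assert (S1 : (a+b-1)*c >= -(a+b-1)*(p*q)) by nra.
    assert (S2 : (q-p)*(2*(b*q-a*p) + 2*p) >= 0) by nra.
    nra.
Qed.

Lemma dot_sub_pos (x y : R2) : norm2 x <> norm2 y ->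
  0 < dot2 (fst x - fst y, snd x - snd y) (fst x - fst y, snd x - snd y).
Proof.
  intros Hne. destruct x as [x1 x2], y as [y1 y2]. unfold dot2; simpl.
  destruct (Rlt_or_le 0 ((x1 - y1) * (x1 - y1) + (x2 - y2) * (x2 - y2))) as [H|H]; [exact H|].
  exfalso. pose proof (Rle_0_sqr (x1-y1)); pose proof (Rle_0_sqr (x2-y2)); unfold Rsqr in *.
  assert (E1 : (x1-y1)*(x1-y1) = 0) by lra. assert (E2 : (x2-y2)*(x2-y2) = 0) by lra.
  apply Rmult_integral in E1. apply Rmult_integral in E2.
  assert (x1 = y1) by (destruct E1; lra). assert (x2 = y2) by (destruct E2; lra).
  subst. apply Hne; reflexivity.
Qed.

Lemma sq_le (a b : R) : 0 <= a -> a <= b -> a * a <= b * b.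
Proof. intros; nra. Qed.

Theorem proposition5p3 (M : mat3) (K : nat) (u : nat -> R) (v : nat -> R2) :
  SL3 M ->
  G_is unit_circle M K ->
  (forall i, (1 <= i <= K)%nat -> Q unit_circle M (u i, v i)) ->
  V1 K v ->
  V2 unit_circle M K v ->
  V3 unit_circle M K u v ->
  (forall i, (1 <= i <= K)%nat -> 0 <= u i) ->
  (forall i j, (1 <= i)%nat -> (i < j)%nat -> (j <= K - 1)%nat ->
     angle2 (v i) (v j) > PI / 3) /\
  (forall i j k, (1 <= i)%nat -> (i < j)%nat -> (j < k)%nat -> (k <= K - 1)%nat ->
     ~ (exists a b, 0 <= a /\ 0 <= b /\
          v i = (a * fst (v j) + b * fst (v k), a * snd (v j) + b * snd (v k)))).
Proof.
  intros HSL HG HQ HV1 HV2 HV3 Hu.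
  destruct HV1 as [Hv1 Hmono1].
  assert (Hmono : forall m n, (1 <= m)%nat -> (m < n)%nat -> (n <= K)%nat ->
            norm2 (v m) < norm2 (v n)).
  { intros m n Hm Hmn HnK. induction n as [|n IH]; [lia|].
    destruct (Nat.eq_dec m n) as [->|Hne]; [apply Hmono1; lia|].
    apply Rlt_trans with (norm2 (v n)); [apply IH; lia | apply Hmono1; lia]. }
  assert (Hpos : forall m, (1 <= m <= K)%nat -> 0 < norm2 (v m)).
  { intros m Hm. destruct (Nat.eq_dec m 1) as [->|Hne]; [exact Hv1|].
    apply Rlt_trans with (norm2 (v 1%nat)); [exact Hv1| apply Hmono; lia]. }
  assert (Hdpos : forall m, (1 <= m <= K)%nat -> 0 < dot2 (v m) (v m)).
  { intros m Hm. rewrite <- nsq. pose proof (Hpos m Hm). nra. }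
  assert (Hbnd : forall m n, (1 <= m)%nat -> (m < n)%nat -> (n <= K)%nat ->
            forall t, 0 < t < 1 -> F_is unit_circle M t (norm2 (v n)) ->
            t <= u m /\ 1 - t <= u m /\ u m < 1).
  { intros m n Hm Hmn HnK t Ht HF.
    destruct (HQ m ltac:(lia)) as [Hl [Ha _]].
    simpl in Ha. apply Rabs_def2 in Ha.
    destruct (notadm M t (norm2 (v n)) (u m) (v m) HF Hl) as [A B];
      [apply Hu; lia | exact Ht | apply Hdpos; lia | apply Hmono; lia |].
    lra. }
  assert (Hpair : forall m n, (1 <= m)%nat -> (m < n)%nat -> (n <= K - 1)%nat ->
            norm2 (v K) * norm2 (v K) <=
            dot2 (fst (v m) - fst (v n), snd (v m) - snd (v n))
                 (fst (v m) - fst (v n), snd (v m) - snd (v n))).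
  { intros m n Hm Hmn HnK.
    destruct (HV3 K ltac:(lia)) as [t [Ht [_ HF]]].
    destruct (Hbnd m K ltac:(lia) ltac:(lia) ltac:(lia) t Ht HF) as [A1 [A2 A3]].
    destruct (Hbnd n K ltac:(lia) ltac:(lia) ltac:(lia) t Ht HF) as [B1 [B2 B3]].
    assert (Hl : in_lattice M (psub (u m, v m) (u n, v n))).
    { apply lat_sub; apply HQ; lia. }
    pose proof (adm M t (norm2 (v K)) _ HF Hl) as A. unfold psub in A; simpl in A.
    rewrite <- nsq. apply sq_le; [apply n_nonneg|]. apply A; [lra|].
    apply dot_sub_pos. apply Rlt_not_eq, Hmono; lia. }
  split.
  - intros i j Hi Hij HjK.
    pose proof (Hpair i j Hi Hij HjK) as P.
    pose proof (Hmono j K ltac:(lia) ltac:(lia) ltac:(lia)) as HjL.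
    pose proof (Hmono i j ltac:(lia) ltac:(lia) ltac:(lia)) as Hij'.
    pose proof (Hpos i ltac:(lia)) as Hi0.
    pose proof (nsq (v i)) as Si. pose proof (nsq (v j)) as Sj.
    unfold angle2. apply acos_gt.
    set (ri := norm2 (v i)) in *. set (rj := norm2 (v j)) in *.
    set (L := norm2 (v K)) in *.
    assert (E : dot2 (fst (v i) - fst (v j), snd (v i) - snd (v j))
                     (fst (v i) - fst (v j), snd (v i) - snd (v j))
                = ri * ri - 2 * dot2 (v i) (v j) + rj * rj).
    { rewrite Si, Sj. unfold dot2; simpl; ring. }
    assert (Hd : 2 * dot2 (v i) (v j) < ri * rj).
    { assert (rj * rj < L * L) by nra. nra. }
    apply (Rmult_lt_reg_r (ri * rj)); [nra|].
    unfold Rdiv. rewrite Rmult_assoc, Rinv_l; [lra | nra].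
  - intros i j k Hi Hij Hjk HkK [a [b [Ha [Hb Hvi]]]].
    destruct (HV3 k ltac:(lia)) as [tk [Htk [[_ [Hk _]] HFk]]]. simpl in Hk.
    destruct (HV3 j ltac:(lia)) as [tj [Htj [[_ [Hj _]] HFj]]]. simpl in Hj.
    destruct (Hbnd i k ltac:(lia) ltac:(lia) ltac:(lia) tk Htk HFk) as [A1 [A2 A3]].
    destruct (Hbnd j k ltac:(lia) ltac:(lia) ltac:(lia) tk Htk HFk) as [B1 [B2 B3]].
    destruct (Hbnd i j ltac:(lia) ltac:(lia) ltac:(lia) tj Htj HFj) as [C1 [C2 C3]].
    pose proof (Hu k ltac:(lia)) as Huk.
    assert (Hl : in_lattice M (psub (padd (u j, v j) (u k, v k)) (u i, v i))).
    { apply lat_sub; [apply lat_add|]; apply HQ; lia. }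
    pose proof (adm M tk (norm2 (v k)) _ HFk Hl) as A. unfold psub, padd in A; simpl in A.
    pose proof (Hpair i j ltac:(lia) ltac:(lia) ltac:(lia)) as P1.
    pose proof (Hpair i k ltac:(lia) ltac:(lia) ltac:(lia)) as P2.
    pose proof (Hmono k K ltac:(lia) ltac:(lia) ltac:(lia)) as HkL.
    pose proof (Hmono j k ltac:(lia) ltac:(lia) ltac:(lia)) as Hjk'.
    pose proof (Hmono i j ltac:(lia) ltac:(lia) ltac:(lia)) as Hij'.
    pose proof (Hpos i ltac:(lia)) as Hi0.
    pose proof (nsq (v i)) as Si. pose proof (nsq (v j)) as Sj. pose proof (nsq (v k)) as Sk.
    pose proof (n_nonneg (v j)) as Nj. pose proof (n_nonneg (v k)) as Nk.
    set (ri := norm2 (v i)) in *. set (rj := norm2 (v j)) in *.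
    set (rk := norm2 (v k)) in *. set (L := norm2 (v K)) in *.
    assert (H3 : (fst (v j) + fst (v k) - fst (v i) = 0 /\ snd (v j) + snd (v k) - snd (v i) = 0) \/
                 dot2 (fst (v j) + fst (v k) - fst (v i), snd (v j) + snd (v k) - snd (v i))
                      (fst (v j) + fst (v k) - fst (v i), snd (v j) + snd (v k) - snd (v i)) >= rk * rk).
    { set (w := (fst (v j) + fst (v k) - fst (v i), snd (v j) + snd (v k) - snd (v i))).
      destruct (Rlt_or_le 0 (dot2 w w)) as [Hw|Hw].
      - right. rewrite <- nsq. apply Rle_ge, sq_le; [apply n_nonneg|]. apply A; [lra|exact Hw].
      - left. unfold w, dot2 in Hw; simpl in Hw.
        set (e1 := fst (v j) + fst (v k) - fst (v i)) in *.
        set (e2 := snd (v j) + snd (v k) - snd (v i)) in *.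
        pose proof (Rle_0_sqr e1); pose proof (Rle_0_sqr e2); unfold Rsqr in *.
        assert (E1 : e1*e1 = 0) by lra. assert (E2 : e2*e2 = 0) by lra.
        apply Rmult_integral in E1. apply Rmult_integral in E2.
        split; [destruct E1|destruct E2]; lra. }
    clearbody ri rj rk L.
    rewrite Hvi in Si, P1, P2, H3.
    destruct (v j) as [x1 y1], (v k) as [x2 y2]. unfold dot2 in *; simpl in *.
    apply (part2_alg x1 y1 x2 y2 a b rj rk ri L); try lra.
Qed.
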